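(* Let $\phi\in T_m(\mathbb{R}^d)$ be a conjugation invariant homogeneous of degree $m$. Then $\phi=\operatorname{shift}_m(\phi)$.
   Context: $T_m(\mathbb{R}^d)=(\mathbb{R}^d)^{\otimes m}$ has basis the words of length $m$ over $\{1,\dots,d\}$. $\operatorname{shift}_m$ is the linear automorphism of $T_m$ with $\operatorname{shift}_m(w_1\cdots w_m)=w_m w_1\cdots w_{m-1}$. A path is a piecewise smooth $X:[0,1]\to\mathbb{R}^d$ with iterated-integrals signature $S(X)\in T((\mathbb{R}^d))$ ($\langle S(X),\mathsf e\rangle=1$, $\langle S(X),wi\rangle=\int_0^1\langle S(X|_{[0,t]}),w\rangle dX^i(t)$, where $\langle\sum_w c_w w,v\rangle=c_v$). $\sqcup$ is concatenation, $B^{-1}$ the reversed path. $\phi$ is a conjugation invariant if $\langle S(A),\phi\rangle=\langle S(B\sqcup A\sqcup B^{-1}),\phi\rangle$ for all paths $A,B$. *)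

(* Defs.v *)
From Stdlib Require Import Reals List Arith.
From Coquelicot Require Import Coquelicot.
Import ListNotations.
Open Scope R_scope.

(* Letters of the alphabet are 0..d-1 (standing for 1..d).
   Words are lists of letters. *)

Fixpoint words (m d : nat) : list (list nat) :=
  match m with
  | O => [nil]
  | S m' => flat_map (fun w => map (fun i => i :: w) (seq 0 d)) (words m' d)
  end.

(* An element of T_m(R^d): its coefficient on each word of length m
   (values on other lists are irrelevant). *)
Definition tensor := list nat -> R.

Definition sum_words (m d : nat) (f : list nat -> R) : R :=
  fold_right Rplus 0 (map f (words m d)).

(* shift_m (w_1 ... w_m) = w_m w_1 ... w_{m-1} *)
Definition shift_word (w : list nat) : list nat :=
  match rev w with
  | nil => nil
  | a :: r => a :: rev r
  end.

Definition shiftT (m d : nat) (phi : tensor) : tensor :=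
  fun v => sum_words m d
    (fun w => if list_eq_dec Nat.eq_dec (shift_word w) v then phi w else 0).

(* Paths: X i t is the i-th coordinate at time t (only t in [0,1], i < d matter). *)
Definition path := nat -> R -> R.

Definition smooth (g : R -> R) : Prop :=
  forall (n : nat) (x : R), ex_derive (Derive_n g n) x.

Definition piecewise_smooth (d : nat) (X : path) : Prop :=
  exists (n : nat) (t : nat -> R),
    t O = 0 /\ t n = 1 /\
    (forall j, (j < n)%nat -> t j < t (S j)) /\
    (forall j i, (j < n)%nat -> (i < d)%nat ->
       exists g : R -> R, smooth g /\
         forall s, t j <= s <= t (S j) -> X i s = g s).

(* iterated integrals, indexed by the reversed word:
   <S(X|[0,t]), e> = 1,  <S(X|[0,t]), w i> = int_0^t <S(X|[0,s]), w> dX^i(s) *)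
Fixpoint sig_rev (X : path) (rw : list nat) (t : R) : R :=
  match rw with
  | nil => 1
  | i :: rw' => RInt (fun s => sig_rev X rw' s * Derive (X i) s) 0 t
  end.

Definition sig (X : path) (w : list nat) : R := sig_rev X (rev w) 1.

Definition pairing (m d : nat) (X : path) (phi : tensor) : R :=
  sum_words m d (fun w => phi w * sig X w).

Definition concat (X Y : path) : path :=
  fun i t => if Rle_dec t (1/2) then X i (2 * t)
             else Y i (2 * t - 1) - Y i 0 + X i 1.

Definition reverse (X : path) : path := fun i t => X i (1 - t).

Definition conjugation_invariant (m d : nat) (phi : tensor) : Prop :=
  forall A B : path, piecewise_smooth d A -> piecewise_smooth d B ->
    pairing m d A phi = pairing m d (concat B (concat A (reverse B))) phi.

(* Main.v *)
Require Import Defs.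
From Stdlib Require Import Reals List.
From Coquelicot Require Import Coquelicot.
Open Scope R_scope.
From Stdlib Require Import Lra Lia Arith FunctionalExtensionality.
Require Import Defs.
Import ListNotations.


Lemma RA_Derive (f : R -> R) s D delta : delta > 0 ->
  (forall h, 0 < h < delta -> f (s+h) = f s + D*h) -> Derive f s = D.
Proof.
  intros Hd H. unfold Derive, Lim.
  destruct (archimed_cor1 delta Hd) as [N [HN HN0]].
  rewrite (Lim_seq_ext_loc _ (fun _ => D)).
  - rewrite Lim_seq_const. reflexivity.
  - exists N. intros n Hn. simpl.
    assert (Hpos : 0 < / (INR n + 1)).
    { apply Rinv_0_lt_compat. pose proof (pos_INR n). lra. }
    assert (Hlt : / (INR n + 1) < delta).
    { apply Rle_lt_trans with (/ INR N); [|lra].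
      apply Rinv_le_contravar. apply lt_0_INR; exact HN0.
      apply le_INR in Hn. lra. }
    rewrite Rplus_0_l, H by lra. field. pose proof (pos_INR n). lra.
Qed.

Definition RA (X : path) := forall i s, exists D delta, delta > 0 /\
  forall h, 0 < h < delta -> X i (s+h) = X i s + D*h.

Lemma minusR (x y : R) : minus x y = x - y. Proof. reflexivity. Qed.
Lemma plusR (x y : R) : plus x y = x + y. Proof. reflexivity. Qed.
Lemma scalR (x y : R) : scal x y = x * y. Proof. reflexivity. Qed.
Lemma exR_Chasles_1 (f : R -> R) a b c : a <= b <= c -> ex_RInt f a c -> ex_RInt f a b.
Proof. apply (@ex_RInt_Chasles_1 R_CompleteNormedModule). Qed.
Lemma exR_Chasles_2 (f : R -> R) a b c : a <= b <= c -> ex_RInt f a c -> ex_RInt f b c.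
Proof. apply (@ex_RInt_Chasles_2 R_CompleteNormedModule). Qed.
Lemma exR_Chasles (f : R -> R) a b c : ex_RInt f a b -> ex_RInt f b c -> ex_RInt f a c.
Proof. apply (@ex_RInt_Chasles R_CompleteNormedModule). Qed.
Lemma RInt_ChaslesR (f : R -> R) a b c : ex_RInt f a b -> ex_RInt f b c ->
  RInt f a b + RInt f b c = RInt f a c.
Proof. apply (@RInt_Chasles R_CompleteNormedModule). Qed.
Lemma exR_plus (f g : R -> R) a b : ex_RInt f a b -> ex_RInt g a b ->
  ex_RInt (fun x => f x + g x) a b.
Proof. apply (@ex_RInt_plus R_CompleteNormedModule). Qed.
Lemma RInt_plusR (f g : R -> R) a b : ex_RInt f a b -> ex_RInt g a b ->
  RInt (fun x => f x + g x) a b = RInt f a b + RInt g a b.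
Proof. apply (@RInt_plus R_CompleteNormedModule). Qed.
Lemma exR_scal (f : R -> R) a b k : ex_RInt f a b -> ex_RInt (fun x => k * f x) a b.
Proof. apply (@ex_RInt_scal R_CompleteNormedModule). Qed.
Lemma RInt_scalR (f : R -> R) a b k : ex_RInt f a b -> RInt (fun x => k * f x) a b = k * RInt f a b.
Proof. apply (@RInt_scal R_CompleteNormedModule). Qed.
Lemma exR_comp_lin (f : R -> R) u v a b : ex_RInt f (u*a+v) (u*b+v) ->
  ex_RInt (fun y => u * f (u*y+v)) a b.
Proof. apply (@ex_RInt_comp_lin R_CompleteNormedModule). Qed.
Lemma RInt_comp_linR (f : R -> R) u v a b : ex_RInt f (u*a+v) (u*b+v) ->
  RInt (fun y => u * f (u*y+v)) a b = RInt f (u*a+v) (u*b+v).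
Proof. apply (@RInt_comp_lin R_CompleteNormedModule). Qed.
Lemma exR_ext (f g : R -> R) a b : (forall x, Rmin a b < x < Rmax a b -> f x = g x) ->
  ex_RInt f a b -> ex_RInt g a b.
Proof. apply (@ex_RInt_ext R_CompleteNormedModule). Qed.
Lemma RInt_extR (f g : R -> R) a b : (forall x, Rmin a b < x < Rmax a b -> f x = g x) ->
  RInt f a b = RInt g a b.
Proof. apply (@RInt_ext R_CompleteNormedModule). Qed.

Ltac toR := match goal with |- ?a = ?b => change (@eq R a b) end.

Definition affine (a v : nat -> R) : path := fun i t => a i + v i * t.
Definition prodv (v : nat -> R) (w : list nat) : R := fold_right (fun i acc => v i * acc) 1 w.

Lemma Derive_affine a v i s : Derive (affine a v i) s = v i.
Proof.
  apply (RA_Derive _ _ _ 1); [lra|]. intros h _. unfold affine. ring.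
Qed.

Lemma sig_rev_affine a v rw t :
  sig_rev (affine a v) rw t = prodv v rw * t^(length rw) / INR (fact (length rw)).
Proof.
  revert t. induction rw as [|i rw IH]; intros t.
  - simpl. field.
  - simpl sig_rev.
    rewrite (RInt_ext _ (fun s => prodv v rw / INR (fact (length rw)) * v i * s ^ (length rw))).
    2:{ intros x _. rewrite IH, Derive_affine. toR. field. apply INR_fact_neq_0. }
    apply is_RInt_unique.
    set (k := length rw).
    set (c := prodv v rw / INR (fact k) * v i).
    replace (prodv v (i :: rw) * t ^ length (i :: rw) / INR (fact (length (i :: rw))))
      with (minus (c / INR (S k) * t ^ (S k)) (c / INR (S k) * 0 ^ (S k))).
    2:{ rewrite minusR. change (length (i :: rw)) with (S k).
        change (fact (S k)) with (S k * fact k)%nat. rewrite mult_INR, S_INR.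
        unfold c. change (prodv v (i :: rw)) with (v i * prodv v rw). cbn [pow]. toR. field. split. apply INR_fact_neq_0.
        pose proof (pos_INR k). lra. }
    apply (is_RInt_derive (fun s => c / INR (S k) * s ^ (S k))).
    + intros x _. auto_derive; [exact I|].
      change (match k with 0%nat => 1 | S _ => INR k + 1 end) with (INR (S k)).
      toR. field. apply not_0_INR. lia.
    + intros x _. apply (ex_derive_continuous (fun s => c * s ^ k)). auto_derive. exact I.
Qed.

Definition Int (X : path) := forall rw i, ex_RInt (fun s => sig_rev X rw s * Derive (X i) s) 0 1.

Lemma Int_affine a v : Int (affine a v).
Proof.
  intros rw i.
  apply (ex_RInt_ext (fun s => prodv v rw / INR (fact (length rw)) * v i * s ^ length rw)).
  - intros x _. rewrite sig_rev_affine, Derive_affine. toR. field. apply INR_fact_neq_0.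
  - apply (@ex_RInt_continuous R_CompleteNormedModule). intros z _.
    apply (ex_derive_continuous (fun s => prodv v rw / INR (fact (length rw)) * v i * s ^ length rw)).
    auto_derive. exact I.
Qed.

Lemma RA_affine a v : RA (affine a v).
Proof. intros i s. exists (v i), 1. split; [lra|]. intros h _. unfold affine. ring. Qed.

Lemma concat_left X Y i s : s <= 1/2 -> concat X Y i s = X i (2*s).
Proof. intros H. unfold concat. destruct (Rle_dec s (1/2)); [reflexivity|lra]. Qed.

Lemma concat_right X Y i s : 1/2 <= s -> concat X Y i s = Y i (2*s-1) - Y i 0 + X i 1.
Proof.
  intros H. unfold concat. destruct (Rle_dec s (1/2)); [|reflexivity].
  assert (s = 1/2) by lra. subst. replace (2*(1/2)-1) with 0 by lra.
  replace (2*(1/2)) with 1 by lra. ring.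
Qed.

Lemma Derive_concat_l X Y i s : RA X -> s < 1/2 ->
  Derive (concat X Y i) s = 2 * Derive (X i) (2*s).
Proof.
  intros HX Hs. destruct (HX i (2*s)) as [D [dl [Hdl H]]].
  rewrite (RA_Derive (X i) (2*s) D dl) by assumption.
  apply (RA_Derive _ _ _ (Rmin (dl/2) (1/2 - s))).
  - apply Rmin_glb_lt; lra.
  - intros h Hh. pose proof (Rmin_l (dl/2) (1/2-s)). pose proof (Rmin_r (dl/2) (1/2-s)).
    rewrite !concat_left by lra. replace (2*(s+h)) with (2*s + 2*h) by ring.
    rewrite H by lra. ring.
Qed.

Lemma Derive_concat_r X Y i s : RA Y -> 1/2 <= s ->
  Derive (concat X Y i) s = 2 * Derive (Y i) (2*s-1).
Proof.
  intros HY Hs. destruct (HY i (2*s-1)) as [D [dl [Hdl H]]].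
  rewrite (RA_Derive (Y i) (2*s-1) D dl) by assumption.
  apply (RA_Derive _ _ _ (dl/2)).
  - lra.
  - intros h Hh.
    rewrite !concat_right by lra. replace (2*(s+h)-1) with (2*s-1 + 2*h) by ring.
    rewrite H by lra. ring.
Qed.

Lemma RA_concat X Y : RA X -> RA Y -> RA (concat X Y).
Proof.
  intros HX HY i s. destruct (Rlt_dec s (1/2)) as [Hs|Hs].
  - destruct (HX i (2*s)) as [D [dl [Hdl H]]].
    exists (2*D), (Rmin (dl/2) (1/2 - s)). split.
    + apply Rmin_glb_lt; lra.
    + intros h Hh. pose proof (Rmin_l (dl/2) (1/2-s)). pose proof (Rmin_r (dl/2) (1/2-s)).
      rewrite !concat_left by lra. replace (2*(s+h)) with (2*s + 2*h) by ring.
      rewrite H by lra. ring.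
  - destruct (HY i (2*s-1)) as [D [dl [Hdl H]]].
    exists (2*D), (dl/2). split; [lra|].
    intros h Hh.
    rewrite !concat_right by lra. replace (2*(s+h)-1) with (2*s-1 + 2*h) by ring.
    rewrite H by lra. ring.
Qed.

Lemma sig_concat_left X Y : RA X -> Int X -> forall rw t, 0 <= t <= 1/2 ->
  sig_rev (concat X Y) rw t = sig_rev X rw (2*t).
Proof.
  intros HX IX rw. induction rw as [|i rw IH]; intros t Ht; [reflexivity|].
  simpl sig_rev.
  set (f := fun s => sig_rev X rw s * Derive (X i) s).
  rewrite (RInt_extR _ (fun y => 2 * f (2*y+0))).
  2:{ intros x Hx. rewrite Rmin_left, Rmax_right in Hx by lra.
      rewrite IH by lra. rewrite Derive_concat_l; [|exact HX|lra]. unfold f.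
      replace (2*x+0) with (2*x) by ring. toR. ring. }
  assert (E : ex_RInt f (2*0+0) (2*t+0)).
  { replace (2*0+0) with 0 by ring. replace (2*t+0) with (2*t) by ring.
    apply (exR_Chasles_1 _ 0 (2*t) 1); [lra|]. apply IX. }
  pose proof (RInt_comp_linR f 2 0 0 t E) as H.
  replace (2*0+0) with 0 in H by ring. replace (2*t+0) with (2*t) in H by ring. exact H.
Qed.

Fixpoint dsum (w : list nat) (F : list nat -> list nat -> R) : R :=
  match w with
  | nil => F nil nil
  | a :: w' => F nil w + dsum w' (fun p q => F (a :: p) q)
  end.

Lemma dsum_ext w F G : (forall p q, F p q = G p q) -> dsum w F = dsum w G.
Proof.
  revert F G; induction w as [|a w IH]; intros F G H; simpl.
  - apply H.
  - rewrite H. f_equal. apply IH. intros; apply H.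
Qed.

Lemma dsum_mult_r w F c : dsum w F * c = dsum w (fun p q => F p q * c).
Proof.
  revert F; induction w as [|a w IH]; intros F; simpl; [reflexivity|].
  rewrite Rmult_plus_distr_r, IH. reflexivity.
Qed.

Lemma dsum_plus w F G : dsum w (fun p q => F p q + G p q) = dsum w F + dsum w G.
Proof.
  revert F G; induction w as [|a w IH]; intros F G; simpl; [reflexivity|].
  rewrite (IH (fun p q => F (a::p) q) (fun p q => G (a::p) q)). ring.
Qed.

Lemma ex_RInt_dsum w (F : R -> list nat -> list nat -> R) a b :
  (forall p q, ex_RInt (fun s => F s p q) a b) -> ex_RInt (fun s => dsum w (F s)) a b.
Proof.
  revert F; induction w as [|x w IH]; intros F H; simpl.
  - apply H.
  - apply (exR_plus (fun s => F s nil (x :: w)) (fun s => dsum w (fun p q => F s (x::p) q))).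
    apply H. apply (IH (fun s p q => F s (x::p) q)). intros; apply H.
Qed.

Lemma RInt_dsum w (F : R -> list nat -> list nat -> R) a b :
  (forall p q, ex_RInt (fun s => F s p q) a b) ->
  RInt (fun s => dsum w (F s)) a b = dsum w (fun p q => RInt (fun s => F s p q) a b).
Proof.
  revert F; induction w as [|x w IH]; intros F H; simpl; [reflexivity|].
  rewrite (RInt_plusR (fun s => F s nil (x :: w)) (fun s => dsum w (fun p q => F s (x::p) q))).
  - rewrite (IH (fun s p q => F s (x::p) q)); [reflexivity|]. intros; apply H.
  - apply H.
  - apply (ex_RInt_dsum w (fun s p q => F s (x::p) q)). intros; apply H.
Qed.

Lemma sig_concat_right X Y : RA X -> Int X -> RA Y -> Int Y -> forall rw t, 1/2 <= t <= 1 ->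
  sig_rev (concat X Y) rw t =
  dsum rw (fun r2 r1 => sig_rev Y r2 (2*t-1) * sig_rev X r1 1).
Proof.
  intros HX IX HY IY rw. induction rw as [|i rw IH]; intros t Ht; [simpl; ring|].
  set (g := fun s => sig_rev (concat X Y) rw s * Derive (concat X Y i) s).
  set (fX := fun s => sig_rev X rw s * Derive (X i) s).
  set (hY := fun u => dsum rw (fun r2 r1 => sig_rev X r1 1 * (sig_rev Y r2 u * Derive (Y i) u))).
  assert (E1 : ex_RInt g 0 (1/2)).
  { apply (exR_ext (fun s => 2 * fX (2*s+0))).
    - intros x Hx. rewrite Rmin_left, Rmax_right in Hx by lra. unfold g, fX.
      rewrite sig_concat_left by (auto; lra). rewrite Derive_concat_l; [|exact HX|lra].
      replace (2*x+0) with (2*x) by ring. ring.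
    - apply exR_comp_lin. replace (2*0+0) with 0 by ring. replace (2*(1/2)+0) with 1 by field.
      apply IX. }
  assert (EhY : forall u, 0 <= u <= 1 -> ex_RInt hY 0 u).
  { intros u Hu. unfold hY.
    apply (ex_RInt_dsum rw (fun s r2 r1 => sig_rev X r1 1 * (sig_rev Y r2 s * Derive (Y i) s))).
    intros p q. apply exR_scal. apply (exR_Chasles_1 _ 0 u 1); [lra|]. apply IY. }
  assert (Eg : forall x, 1/2 < x < t -> g x = 2 * hY (2*x + -1)).
  { intros x Hx. unfold g, hY. rewrite IH by lra. rewrite Derive_concat_r; [|exact HY|lra].
    replace (2*x + -1) with (2*x-1) by ring.
    rewrite dsum_mult_r, (Rmult_comm 2 (dsum _ _)), dsum_mult_r.
    apply dsum_ext. intros p q. ring. }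
  assert (E2 : ex_RInt g (1/2) t).
  { apply (exR_ext (fun s => 2 * hY (2*s + -1))).
    - intros x Hx. rewrite Rmin_left, Rmax_right in Hx by lra. symmetry. apply Eg. lra.
    - apply exR_comp_lin. replace (2*(1/2)+-1) with 0 by field. apply EhY. lra. }
  change (sig_rev (concat X Y) (i :: rw) t) with (RInt g 0 t).
  rewrite <- (RInt_ChaslesR g 0 (1/2) t E1 E2).
  replace (RInt g 0 (1/2)) with (sig_rev X (i::rw) 1).
  2:{ change (RInt g 0 (1/2)) with (sig_rev (concat X Y) (i::rw) (1/2)).
      rewrite sig_concat_left by (auto; lra). f_equal. field. }
  rewrite (RInt_extR g (fun s => 2 * hY (2*s + -1))).
  2:{ intros x Hx. rewrite Rmin_left, Rmax_right in Hx by lra. apply Eg. lra. }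
  rewrite RInt_comp_linR.
  2:{ replace (2*(1/2)+-1) with 0 by field. apply EhY. lra. }
  replace (2*(1/2)+-1) with 0 by field. replace (2*t+-1) with (2*t-1) by ring.
  unfold hY.
  rewrite (RInt_dsum rw (fun s r2 r1 => sig_rev X r1 1 * (sig_rev Y r2 s * Derive (Y i) s))).
  2:{ intros p q. apply exR_scal. apply (exR_Chasles_1 _ 0 (2*t-1) 1); [lra|]. apply IY. }
  simpl dsum at 2. simpl sig_rev at 2. rewrite Rmult_1_l. f_equal.
  apply dsum_ext. intros p q. rewrite RInt_scalR.
  - simpl sig_rev. ring.
  - apply (exR_Chasles_1 _ 0 (2*t-1) 1); [lra|]. apply IY.
Qed.

Lemma Int_concat X Y : RA X -> Int X -> RA Y -> Int Y -> Int (concat X Y).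
Proof.
  intros HX IX HY IY rw i.
  set (g := fun s => sig_rev (concat X Y) rw s * Derive (concat X Y i) s).
  set (fX := fun s => sig_rev X rw s * Derive (X i) s).
  set (hY := fun u => dsum rw (fun r2 r1 => sig_rev X r1 1 * (sig_rev Y r2 u * Derive (Y i) u))).
  apply (exR_Chasles g 0 (1/2) 1).
  { apply (exR_ext (fun s => 2 * fX (2*s+0))).
    - intros x Hx. rewrite Rmin_left, Rmax_right in Hx by lra. unfold g, fX.
      rewrite sig_concat_left by (auto; lra). rewrite Derive_concat_l; [|exact HX|lra].
      replace (2*x+0) with (2*x) by ring. ring.
    - apply exR_comp_lin. replace (2*0+0) with 0 by ring. replace (2*(1/2)+0) with 1 by field.
      apply IX. }
  apply (exR_ext (fun s => 2 * hY (2*s + -1))).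
  - intros x Hx. rewrite Rmin_left, Rmax_right in Hx by lra.
    unfold g, hY. rewrite sig_concat_right by (auto; lra). rewrite Derive_concat_r; [|exact HY|lra].
    replace (2*x + -1) with (2*x-1) by ring.
    rewrite dsum_mult_r, (Rmult_comm 2 (dsum _ _)), dsum_mult_r.
    apply dsum_ext. intros p q. ring.
  - apply exR_comp_lin. replace (2*(1/2)+-1) with 0 by field. replace (2*1+-1) with 1 by ring.
    unfold hY.
    apply (ex_RInt_dsum rw (fun s r2 r1 => sig_rev X r1 1 * (sig_rev Y r2 s * Derive (Y i) s))).
    intros p q. apply exR_scal. apply IY.
Qed.

Inductive good : path -> Prop :=
  | g_aff a v : good (affine a v)
  | g_cat X Y : good X -> good Y -> good (concat X Y).

Lemma good_RA_Int X : good X -> RA X /\ Int X.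
Proof.
  induction 1 as [a v|X Y _ [HX IX] _ [HY IY]].
  - split; [apply RA_affine|apply Int_affine].
  - split; [apply RA_concat; auto|apply Int_concat; auto].
Qed.

Lemma dsum_app_last w a F :
  dsum (w ++ [a]) F = dsum w (fun p q => F p (q ++ [a])) + F (w ++ [a]) nil.
Proof.
  revert F; induction w as [|x w IH]; intros F; simpl; [reflexivity|].
  rewrite IH. ring.
Qed.

Lemma dsum_rev w F : dsum (rev w) F = dsum w (fun p q => F (rev q) (rev p)).
Proof.
  revert F; induction w as [|a w IH]; intros F; [reflexivity|].
  simpl rev at 1. rewrite dsum_app_last, IH. simpl. rewrite Rplus_comm. f_equal.
Qed.

Lemma chen X Y : good X -> good Y -> forall w,
  sig (concat X Y) w = dsum w (fun p q => sig X p * sig Y q).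
Proof.
  intros GX GY w. destruct (good_RA_Int X GX) as [HX IX]. destruct (good_RA_Int Y GY) as [HY IY].
  unfold sig. rewrite sig_concat_right by (auto; lra).
  rewrite dsum_rev. replace (2*1-1) with 1 by ring. apply dsum_ext. intros p q. ring.
Qed.

Lemma prodv_app v a b : prodv v (a ++ b) = prodv v a * prodv v b.
Proof. induction a as [|x a IH]; simpl; [ring|]. unfold prodv in *. rewrite IH. ring. Qed.

Lemma prodv_rev v w : prodv v (rev w) = prodv v w.
Proof.
  induction w as [|x w IH]; [reflexivity|]. simpl rev. rewrite prodv_app, IH.
  unfold prodv; simpl. ring.
Qed.

Lemma sig_affine a v w : sig (affine a v) w = prodv v w / INR (fact (length w)).
Proof.
  unfold sig. rewrite sig_rev_affine, pow1, Rmult_1_r, length_rev, prodv_rev. reflexivity.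
Qed.

Definition PA (X : path) := exists n (t : nat -> R), t O = 0 /\ t n = 1 /\
  (forall j, (j < n)%nat -> t j < t (S j)) /\
  (forall j i, (j < n)%nat -> exists a c, forall s, t j <= s <= t (S j) -> X i s = a + c * s).

Lemma mono_le n (t : nat -> R) : (forall j, (j < n)%nat -> t j < t (S j)) ->
  forall j k, (j <= k <= n)%nat -> t j <= t k.
Proof.
  intros H j k. induction k as [|k IH]; intros Hk.
  - replace j with 0%nat by lia. lra.
  - destruct (Nat.eq_dec j (S k)) as [->|Hne]; [lra|].
    apply Rle_trans with (t k). apply IH; lia. left. apply H. lia.
Qed.

Lemma PA_affine a v : PA (affine a v).
Proof.
  exists 1%nat, INR. repeat split.
  - intros j Hj. replace j with 0%nat by lia. simpl. lra.
  - intros j i Hj. exists (a i), (v i). intros s _. reflexivity.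
Qed.

Lemma PA_concat X Y : PA X -> PA Y -> PA (concat X Y).
Proof.
  intros [n [t [Ht0 [Htn [Hinc Hpc]]]]] [p [u [Hu0 [Hup [Huinc Hupc]]]]].
  assert (Hp : (0 < p)%nat).
  { destruct p; [rewrite Hu0 in Hup; lra|lia]. }
  set (w := fun j => if (j <=? n)%nat then t j / 2 else (1 + u (j - n)%nat) / 2).
  assert (Wl : forall j, (j <= n)%nat -> w j = t j / 2).
  { intros j Hj. unfold w. destruct (Nat.leb_spec j n); [reflexivity|lia]. }
  assert (Wr : forall j, (n <= j)%nat -> w j = (1 + u (j - n)%nat) / 2).
  { intros j Hj. unfold w. destruct (Nat.leb_spec j n).
    - replace j with n by lia. rewrite Nat.sub_diag, Hu0, Htn. lra.
    - reflexivity. }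
  assert (Tle : forall j, (j <= n)%nat -> t j <= 1).
  { intros j Hj. rewrite <- Htn. apply (mono_le n t Hinc). lia. }
  assert (Uge : forall j, (j <= p)%nat -> 0 <= u j).
  { intros j Hj. rewrite <- Hu0. apply (mono_le p u Huinc). lia. }
  exists (n + p)%nat, w. repeat split.
  - rewrite Wl by lia. rewrite Ht0. lra.
  - rewrite Wr by lia. replace (n + p - n)%nat with p by lia. rewrite Hup. lra.
  - intros j Hj. destruct (Nat.lt_ge_cases j n) as [Hjn|Hjn].
    + rewrite !Wl by lia. pose proof (Hinc j Hjn). lra.
    + rewrite !Wr by lia. replace (S j - n)%nat with (S (j - n)) by lia.
      pose proof (Huinc (j - n)%nat ltac:(lia)). lra.
  - intros j i Hj. destruct (Nat.lt_ge_cases j n) as [Hjn|Hjn].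
    + destruct (Hpc j i Hjn) as [a [c Hac]]. exists a, (2*c). intros s Hs.
      rewrite !Wl in Hs by lia. pose proof (Tle (S j) ltac:(lia)).
      rewrite concat_left by lra. rewrite Hac by lra. ring.
    + destruct (Hupc (j - n)%nat i ltac:(lia)) as [a [c Hac]].
      exists (a - c - Y i 0 + X i 1), (2*c). intros s Hs.
      rewrite !Wr in Hs by lia. replace (S j - n)%nat with (S (j - n)) in Hs by lia.
      pose proof (Uge (j - n)%nat ltac:(lia)).
      rewrite concat_right by lra. rewrite Hac by lra. ring.
Qed.

Lemma good_PA X : good X -> PA X.
Proof. induction 1; [apply PA_affine|apply PA_concat; auto]. Qed.

Lemma smooth_affine a c : smooth (fun s => a + c * s).
Proof.
  intros n x.
  assert (H : forall n, exists a' c', forall x, Derive_n (fun s => a + c * s) n x = a' + c' * x).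
  { induction n0 as [|n0 [a' [c' IH]]].
    - exists a, c. intros; reflexivity.
    - exists c', 0. intros y. simpl. apply (RA_Derive _ _ _ 1); [lra|].
      intros h _. rewrite !IH. ring. }
  destruct (H n) as [a' [c' Hn]].
  apply (ex_derive_ext (fun s => a' + c' * s)).
  - intros; symmetry; apply Hn.
  - auto_derive. exact I.
Qed.

Lemma PA_ps d X : PA X -> piecewise_smooth d X.
Proof.
  intros [n [t [H0 [H1 [H2 H3]]]]]. exists n, t. repeat split; auto.
  intros j i Hj _. destruct (H3 j i Hj) as [a [c Hac]].
  exists (fun s => a + c * s). split; [apply smooth_affine|exact Hac].
Qed.


Definition lsum {A} (l : list A) (f : A -> R) : R := fold_right Rplus 0 (map f l).

Lemma lsum_app {A} (l1 l2 : list A) f : lsum (l1 ++ l2) f = lsum l1 f + lsum l2 f.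
Proof. unfold lsum. rewrite map_app, fold_right_app. induction l1; simpl; [ring|]. rewrite IHl1. ring. Qed.

Lemma lsum_flat_map {A B} (l : list A) (g : A -> list B) f :
  lsum (flat_map g l) f = lsum l (fun x => lsum (g x) f).
Proof. induction l as [|x l IH]; [reflexivity|]. simpl. rewrite lsum_app, IH. reflexivity. Qed.

Lemma lsum_ext_in {A} (l : list A) f g : (forall x, In x l -> f x = g x) -> lsum l f = lsum l g.
Proof.
  induction l as [|x l IH]; intros H; [reflexivity|]. unfold lsum; simpl.
  rewrite H by (left; auto). f_equal. apply IH. intros; apply H; right; auto.
Qed.

Lemma lsum_plus {A} (l : list A) f g : lsum l (fun x => f x + g x) = lsum l f + lsum l g.
Proof. induction l as [|x l IH]; unfold lsum in *; simpl; [ring|]. rewrite IH. ring. Qed.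

Lemma lsum_scal {A} (l : list A) f c : lsum l (fun x => c * f x) = c * lsum l f.
Proof. induction l as [|x l IH]; unfold lsum in *; simpl; [ring|]. rewrite IH. ring. Qed.

Lemma lsum_zero {A} (l : list A) : lsum l (fun _ => 0) = 0.
Proof. induction l as [|x l IH]; unfold lsum in *; simpl; [ring|]. rewrite IH. ring. Qed.

Lemma lsum_swap {A B} (l1 : list A) (l2 : list B) f :
  lsum l1 (fun x => lsum l2 (fun y => f x y)) = lsum l2 (fun y => lsum l1 (fun x => f x y)).
Proof.
  induction l1 as [|x l1 IH].
  - unfold lsum at 1. simpl. symmetry. apply lsum_zero.
  - unfold lsum at 1; simpl. fold (lsum l1 (fun x => lsum l2 (fun y => f x y))).
    rewrite IH. rewrite <- lsum_plus. reflexivity.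
Qed.

Lemma lsum_seq_delta d b (g : nat -> R) : (b < d)%nat ->
  lsum (seq 0 d) (fun i => if Nat.eqb i b then g i else 0) = g b.
Proof.
  induction d as [|d IH]; intros Hb; [lia|].
  rewrite seq_S, lsum_app. simpl (0 + d)%nat.
  destruct (Nat.eq_dec b d) as [->|Hne].
  - rewrite (lsum_ext_in _ _ (fun _ => 0)).
    + rewrite lsum_zero. unfold lsum; simpl. rewrite Nat.eqb_refl. ring.
    + intros x Hx. apply in_seq in Hx. destruct (Nat.eqb_spec x d); [lia|reflexivity].
  - rewrite IH by lia. unfold lsum; simpl. destruct (Nat.eqb_spec d b); [lia|]. ring.
Qed.

Lemma words_char m d w : In w (words m d) <-> length w = m /\ List.Forall (fun x => (x < d)%nat) w.
Proof.
  revert w. induction m as [|m IH]; intros w; simpl.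
  - split.
    + intros [<-|[]]. split; auto.
    + intros [Hl _]. destruct w; [auto|simpl in Hl; lia].
  - rewrite in_flat_map. split.
    + intros [x [Hx Hw]]. apply in_map_iff in Hw. destruct Hw as [i [<- Hi]].
      apply in_seq in Hi. apply IH in Hx. destruct Hx as [Hl HF].
      simpl. split; [lia|]. constructor; [lia|auto].
    + intros [Hl HF]. destruct w as [|i w]; [simpl in Hl; lia|].
      inversion HF; subst. exists w. split.
      * apply IH. split; auto.
      * apply in_map_iff. exists i. split; auto. apply in_seq. lia.
Qed.

Lemma words_snoc m d q i : In (q ++ [i]) (words (S m) d) <-> In q (words m d) /\ (i < d)%nat.
Proof.
  rewrite !words_char, length_app, Forall_app. simpl. split.
  - intros [Hl [HF Hi]]. inversion Hi; subst. split; [split; [lia|auto]|auto].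
  - intros [[Hl HF] Hi]. split; [lia|split; auto].
Qed.

Lemma words_snoc_decomp m d w : In w (words (S m) d) ->
  exists q i, w = q ++ [i] /\ In q (words m d) /\ (i < d)%nat.
Proof.
  intros H. assert (Hnil : w <> nil).
  { intros ->. apply words_char in H. simpl in H. destruct H; lia. }
  destruct (exists_last Hnil) as [q [i ->]]. exists q, i. split; auto.
  apply words_snoc. auto.
Qed.

Lemma lsum_words_S m d f :
  lsum (words (S m) d) f = lsum (words m d) (fun q => lsum (seq 0 d) (fun i => f (i :: q))).
Proof. simpl. rewrite lsum_flat_map. apply lsum_ext_in. intros q _. unfold lsum. rewrite map_map. reflexivity. Qed.

Lemma lsum_words_snoc m d f :
  lsum (words (S m) d) f = lsum (words m d) (fun q => lsum (seq 0 d) (fun i => f (q ++ [i]))).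
Proof.
  revert f. induction m as [|m IH]; intros f.
  - rewrite lsum_words_S. simpl. unfold lsum at 1 3. simpl. reflexivity.
  - rewrite lsum_words_S. rewrite (IH (fun w => lsum (seq 0 d) (fun i => f (i :: w)))).
    rewrite (lsum_words_S m d). apply lsum_ext_in. intros q _.
    rewrite lsum_swap. reflexivity.
Qed.

Lemma lsum_words_delta m d q (g : list nat -> R) : In q (words m d) ->
  lsum (words m d) (fun w => if list_eq_dec Nat.eq_dec w q then g w else 0) = g q.
Proof.
  revert q g. induction m as [|m IH]; intros q g Hq.
  - simpl in Hq. destruct Hq as [<-|[]]. unfold lsum; simpl.
    destruct (list_eq_dec Nat.eq_dec [] []); [ring|congruence].
  - apply words_char in Hq. destruct q as [|j q]; [simpl in Hq; lia|].
    destruct Hq as [Hl HF]. inversion HF; subst.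
    assert (Hq : In q (words m d)) by (apply words_char; split; auto).
    rewrite lsum_words_S.
    rewrite (lsum_ext_in _ _ (fun w => if list_eq_dec Nat.eq_dec w q then g (j :: w) else 0)).
    + apply (IH q (fun w => g (j :: w))); auto.
    + intros w _. rewrite (lsum_ext_in _ _ (fun i => if Nat.eqb i j then
           (if list_eq_dec Nat.eq_dec w q then g (j :: w) else 0) else 0)).
      * apply lsum_seq_delta. auto.
      * intros i _. destruct (Nat.eqb_spec i j) as [->|Hij].
        -- destruct (list_eq_dec Nat.eq_dec w q) as [->|E'].
           ++ destruct (list_eq_dec Nat.eq_dec (j :: q) (j :: q)); [reflexivity|congruence].
           ++ destruct (list_eq_dec Nat.eq_dec (j :: w) (j :: q)) as [E|E];
              [inversion E; congruence|reflexivity].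
        -- destruct (list_eq_dec Nat.eq_dec (i :: w) (j :: q)) as [E|E];
           [inversion E; congruence|reflexivity].
Qed.

Lemma shift_snoc q i : shift_word (q ++ [i]) = i :: q.
Proof. unfold shift_word. rewrite rev_app_distr. simpl. rewrite rev_involutive. reflexivity. Qed.


Lemma is_derive_multR (f g : R -> R) x df dg : is_derive f x df -> is_derive g x dg ->
  is_derive (fun y => f y * g y) x (df * g x + f x * dg).
Proof. intros Hf Hg. exact (is_derive_mult f g x df dg Hf Hg Rmult_comm). Qed.

Lemma is_derive_plusR (f g : R -> R) x df dg : is_derive f x df -> is_derive g x dg ->
  is_derive (fun y => f y + g y) x (df + dg).
Proof. intros Hf Hg. exact (is_derive_plus f g x df dg Hf Hg). Qed.

Lemma is_derive_constR (c x : R) : is_derive (fun _ => c) x 0.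
Proof. exact (is_derive_const c x). Qed.

Lemma is_derive_extR (f g : R -> R) x l : (forall t, f t = g t) -> is_derive f x l -> is_derive g x l.
Proof. apply is_derive_ext. Qed.

Lemma is_derive_eqR (f : R -> R) x l l' : l = l' -> is_derive f x l -> is_derive f x l'.
Proof. intros ->; auto. Qed.

Lemma is_derive_lsum {A} (l : list A) (f : R -> A -> R) f' :
  (forall x, is_derive (fun e => f e x) 0 (f' x)) ->
  is_derive (fun e => lsum l (f e)) 0 (lsum l f').
Proof.
  intros H. induction l as [|x l IH].
  - unfold lsum; simpl. apply is_derive_constR.
  - exact (is_derive_plusR (fun e => f e x) (fun e => lsum l (f e)) 0 _ _ (H x) IH).
Qed.

Lemma is_derive_dsum w (F : R -> list nat -> list nat -> R) F' :
  (forall p q, is_derive (fun e => F e p q) 0 (F' p q)) ->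
  is_derive (fun e => dsum w (F e)) 0 (dsum w F').
Proof.
  revert F F'. induction w as [|a w IH]; intros F F' H; simpl.
  - apply H.
  - exact (is_derive_plusR (fun e => F e nil (a :: w)) (fun e => dsum w (fun p q => F e (a::p) q)) 0 _ _
      (H nil (a :: w)) (IH (fun e p q => F e (a::p) q) (fun p q => F' (a::p) q) (fun p q => H (a::p) q))).
Qed.

Lemma deriv_const_zero (g : R -> R) C L : (forall e, g e = C) -> is_derive g 0 L -> L = 0.
Proof.
  intros Hg HL. assert (H : is_derive (fun _ => C) 0 L) by (apply (is_derive_extR g); auto).
  apply is_derive_unique in H. rewrite Derive_const in H. auto.
Qed.

Definition ve (b : nat) (k e : R) : nat -> R := fun i => if Nat.eqb i b then k * e else 0.
Definition ind0 (p : list nat) : R := match p with nil => 1 | _ => 0 end.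
Definition ind1 (b : nat) (p : list nat) : R :=
  match p with [x] => if Nat.eqb x b then 1 else 0 | _ => 0 end.

Lemma prodv_ve0 b k p : prodv (ve b k 0) p = ind0 p.
Proof.
  destruct p as [|x p]; [reflexivity|]. unfold prodv; simpl. unfold ve at 1.
  destruct (Nat.eqb x b); ring.
Qed.

Lemma prodv_ve_der b k p : is_derive (fun e => prodv (ve b k e) p) 0 (k * ind1 b p).
Proof.
  induction p as [|x p IH].
  - apply (is_derive_eqR _ _ 0); [simpl; ring|]. unfold prodv; simpl. apply is_derive_constR.
  - set (dv := if Nat.eqb x b then k else 0).
    assert (Hv : is_derive (fun e => ve b k e x) 0 dv).
    { unfold ve, dv. destruct (Nat.eqb x b).
      - apply (is_derive_extR (fun e => k * e)); [auto|]. auto_derive; [exact I|ring].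
      - apply is_derive_constR. }
    pose proof (is_derive_multR _ _ 0 _ _ Hv IH) as H.
    refine (is_derive_eqR _ _ _ _ _ H).
    rewrite prodv_ve0. unfold ve, dv.
    destruct p as [|y p]; simpl; destruct (Nat.eqb x b); ring.
Qed.

Lemma sig_seg_der b k (a : R -> nat -> R) w :
  is_derive (fun e => sig (affine (a e) (ve b k e)) w) 0 (k * ind1 b w).
Proof.
  apply (is_derive_extR (fun e => prodv (ve b k e) w * / INR (fact (length w)))).
  { intros t. rewrite sig_affine. reflexivity. }
  pose proof (is_derive_multR _ _ 0 _ _ (prodv_ve_der b k w)
                (is_derive_constR (/ INR (fact (length w))) 0)) as H.
  refine (is_derive_eqR _ _ _ _ _ H).
  destruct w as [|x [|y r]]; simpl; try ring. rewrite Rinv_1. ring.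
Qed.

Lemma sig_seg0 b k a w : sig (affine a (ve b k 0)) w = ind0 w.
Proof.
  rewrite sig_affine, prodv_ve0. destruct w; simpl; unfold Rdiv; [rewrite Rinv_1|]; ring.
Qed.

Lemma dsum_zero w : dsum w (fun _ _ => 0) = 0.
Proof. induction w as [|a w IH]; simpl; [reflexivity|]. rewrite IH. ring. Qed.

Lemma dsum_ind0_l w G : dsum w (fun p q => ind0 p * G q) = G w.
Proof.
  destruct w as [|a w]; simpl; [ring|].
  rewrite (dsum_ext _ _ (fun _ _ => 0)) by (intros; simpl; ring). rewrite dsum_zero. ring.
Qed.

Lemma dsum_ind0_r w G : dsum w (fun p q => G p * ind0 q) = G w.
Proof.
  revert G. induction w as [|a w IH]; intros G; simpl; [ring|].
  rewrite (IH (fun p => G (a :: p))). ring.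
Qed.

Lemma dsum_ind1_l x w b G :
  dsum (x :: w) (fun p q => ind1 b p * G q) = if Nat.eqb x b then G w else 0.
Proof.
  simpl. rewrite (dsum_ext _ _ (fun p q => ind0 p * ((if Nat.eqb x b then 1 else 0) * G q))).
  - rewrite dsum_ind0_l. destruct (Nat.eqb x b); ring.
  - intros p q. destruct p; simpl; destruct (Nat.eqb x b); ring.
Qed.

Lemma dsum_ind1_r w x b G :
  dsum (w ++ [x]) (fun p q => G p * ind1 b q) = if Nat.eqb x b then G w else 0.
Proof.
  revert G. induction w as [|a w IH]; intros G.
  - simpl. destruct (Nat.eqb x b); ring.
  - change ((a :: w) ++ [x]) with (a :: (w ++ [x])). simpl dsum.
    rewrite (IH (fun p => G (a :: p))).
    destruct (w ++ [x]) as [|y r] eqn:E.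
    + destruct w; discriminate.
    + simpl. ring.
Qed.

Lemma is_derive_scalR (c : R) (f : R -> R) x df : is_derive f x df ->
  is_derive (fun y => c * f y) x (c * df).
Proof.
  intros H. pose proof (is_derive_multR (fun _ => c) f x 0 df (is_derive_constR c x) H) as H'.
  refine (is_derive_eqR _ _ _ _ _ H'). toR; ring.
Qed.

Lemma span d k : forall psi : list nat -> R,
  (forall A, good A -> lsum (words k d) (fun q => psi q * sig A q) = 0) ->
  forall q, In q (words k d) -> psi q = 0.
Proof.
  induction k as [|k IH]; intros psi H.
  - intros q Hq. simpl in Hq. destruct Hq as [<-|[]].
    specialize (H (affine (fun _ => 0) (fun _ => 0)) (g_aff _ _)).
    unfold lsum in H. simpl in H. unfold sig in H. simpl in H. lra.
  - assert (Hc : forall c, (c < d)%nat -> forall q', In q' (words k d) -> psi (q' ++ [c]) = 0).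
    { intros c Hcd. apply (IH (fun q' => psi (q' ++ [c]))). intros A GA.
      set (g := fun e => lsum (words (S k) d)
                  (fun q => psi q * sig (concat A (affine (fun _ => 0) (ve c 1 e))) q)).
      assert (Hg : forall e, g e = 0) by (intros e; apply H; constructor; [auto|constructor]).
      assert (Hd : is_derive g 0 (lsum (words (S k) d)
                    (fun q => psi q * dsum q (fun p r => sig A p * (1 * ind1 c r))))).
      { unfold g. apply is_derive_lsum. intros q.
        apply (is_derive_extR (fun e => psi q * dsum q (fun p r => sig A p *
                     sig (affine (fun _ => 0) (ve c 1 e)) r))).
        { intros e. rewrite chen; [reflexivity|auto|constructor]. }
        apply is_derive_scalR.
        apply (is_derive_dsum q (fun e p r => sig A p * sig (affine (fun _ => 0) (ve c 1 e)) r)).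
        intros p r. apply is_derive_scalR.
        apply (sig_seg_der c 1 (fun _ _ => 0)). }
      pose proof (deriv_const_zero g 0 _ Hg Hd) as L.
      rewrite lsum_words_snoc in L. rewrite <- L. apply lsum_ext_in. intros q' _.
      rewrite (lsum_ext_in _ _ (fun i => if Nat.eqb i c then psi (q' ++ [i]) * sig A q' else 0)).
      - rewrite lsum_seq_delta by auto. reflexivity.
      - intros i _. rewrite (dsum_ext _ _ (fun p r => sig A p * ind1 c r)) by (intros; ring).
        rewrite dsum_ind1_r. destruct (Nat.eqb i c); ring. }
    intros q Hq. destruct (words_snoc_decomp _ _ _ Hq) as [q' [i [-> [Hq' Hi]]]]. apply Hc; auto.
Qed.

Lemma conj_deriv d m phi b A : good A -> conjugation_invariant m d phi ->
  lsum (words m d) (fun w => phi w * (dsum w (fun p q => 1 * ind1 b p * sig A q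
        + ind0 p * dsum q (fun q1 q2 => sig A q1 * (-1 * ind1 b q2))))) = 0.
Proof.
  intros GA Hc.
  set (B := fun e => affine (fun _ => 0) (ve b 1 e)).
  set (Rv := fun e => affine (ve b 1 e) (ve b (-1) e)).
  set (g := fun e => pairing m d (concat (B e) (concat A (Rv e))) phi).
  assert (Hg : forall e, g e = pairing m d A phi).
  { intros e. unfold g. symmetry.
    replace (Rv e) with (reverse (B e)).
    - apply Hc. apply PA_ps, good_PA; auto. apply PA_ps, PA_affine.
    - unfold Rv, B. extensionality i; extensionality t. unfold reverse, affine, ve.
      destruct (Nat.eqb i b); ring. }
  apply (deriv_const_zero g _ _ Hg).
  unfold g, pairing, sum_words. change (fold_right Rplus 0 (map ?f ?l)) with (lsum l f).
  apply is_derive_lsum. intros w.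
  apply (is_derive_extR (fun e => phi w * dsum w (fun p q => sig (B e) p *
            dsum q (fun q1 q2 => sig A q1 * sig (Rv e) q2)))).
  { intros e. rewrite chen; [|constructor|constructor; [auto|constructor]].
    f_equal. apply dsum_ext. intros p q. rewrite chen; [reflexivity|auto|constructor]. }
  apply is_derive_scalR.
  apply (is_derive_dsum w (fun e p q => sig (B e) p * dsum q (fun q1 q2 => sig A q1 * sig (Rv e) q2))).
  intros p q.
  assert (HB : is_derive (fun e => sig (B e) p) 0 (1 * ind1 b p))
    by (apply (sig_seg_der b 1 (fun _ _ => 0))).
  assert (HR : is_derive (fun e => dsum q (fun q1 q2 => sig A q1 * sig (Rv e) q2)) 0
                 (dsum q (fun q1 q2 => sig A q1 * (-1 * ind1 b q2)))).
  { apply (is_derive_dsum q (fun e q1 q2 => sig A q1 * sig (Rv e) q2)).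
    intros q1 q2. apply is_derive_scalR. apply (sig_seg_der b (-1) (fun e => ve b 1 e)). }
  pose proof (is_derive_multR _ _ 0 _ _ HB HR) as H.
  refine (is_derive_eqR _ _ _ _ _ H).
  unfold B, Rv. rewrite sig_seg0.
  rewrite (dsum_ext _ _ (fun q1 q2 => sig A q1 * ind0 q2)) by (intros; rewrite sig_seg0; reflexivity).
  rewrite dsum_ind0_r. reflexivity.
Qed.

Theorem mainTheorem5 (m d : nat) (phi : tensor) :
  conjugation_invariant m d phi ->
  forall v, In v (words m d) -> phi v = shiftT m d phi v.
Proof.
  intros Hc v Hv. destruct m as [|m].
  - simpl in Hv. destruct Hv as [<-|[]]. unfold shiftT, sum_words. simpl.
    destruct (list_eq_dec Nat.eq_dec [] []); [ring|congruence].
  - assert (Hv' := Hv). apply words_char in Hv'. destruct v as [|b q]; [simpl in Hv'; lia|].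
    destruct Hv' as [Hl HF]. inversion HF; subst.
    assert (Hq : In q (words m d)) by (apply words_char; split; auto).
    assert (Hpsi : forall q, In q (words m d) -> phi (b :: q) - phi (q ++ [b]) = 0).
    { apply (span d m (fun q => phi (b :: q) - phi (q ++ [b]))). intros A GA.
      pose proof (conj_deriv d (S m) phi b A GA Hc) as L.
      rewrite (lsum_ext_in _ _ (fun w => phi w * dsum w (fun p q => ind1 b p * sig A q)
                + phi w * dsum w (fun q1 q2 => (-1 * sig A q1) * ind1 b q2))) in L.
      2:{ intros w _. rewrite dsum_plus, dsum_ind0_l. rewrite Rmult_plus_distr_l. f_equal.
          - f_equal. apply dsum_ext. intros; ring.
          - f_equal. apply dsum_ext. intros; ring. }
      rewrite lsum_plus in L. rewrite lsum_words_S, (lsum_words_snoc m d) in L.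
      rewrite <- L, <- lsum_plus. apply lsum_ext_in. intros q' _.
      rewrite (lsum_ext_in _ _ (fun i => if Nat.eqb i b then phi (i :: q') * sig A q' else 0)).
      2:{ intros i _. rewrite dsum_ind1_l. destruct (Nat.eqb i b); ring. }
      rewrite (lsum_ext_in (seq 0 d) (fun i => phi (q' ++ [i]) * dsum (q' ++ [i]) (fun q1 q2 => -1 * sig A q1 * ind1 b q2)) (fun i => if Nat.eqb i b then - (phi (q' ++ [i]) * sig A q') else 0)).
      2:{ intros i _. rewrite dsum_ind1_r. destruct (Nat.eqb i b); ring. }
      rewrite !lsum_seq_delta by auto. ring. }
    unfold shiftT, sum_words. change (fold_right Rplus 0 (map ?f ?l)) with (lsum l f).
    rewrite lsum_words_snoc.
    rewrite (lsum_ext_in _ _ (fun q' => if list_eq_dec Nat.eq_dec q' q then phi (q' ++ [b]) else 0)).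
    + rewrite lsum_words_delta by auto. specialize (Hpsi q Hq). lra.
    + intros q' _.
      rewrite (lsum_ext_in _ _ (fun i => if Nat.eqb i b then
                 (if list_eq_dec Nat.eq_dec q' q then phi (q' ++ [i]) else 0) else 0)).
      * apply lsum_seq_delta. auto.
      * intros i _. rewrite shift_snoc.
        destruct (Nat.eqb_spec i b) as [->|Hib].
        -- destruct (list_eq_dec Nat.eq_dec q' q) as [->|E'].
           ++ destruct (list_eq_dec Nat.eq_dec (b :: q) (b :: q)); [reflexivity|congruence].
           ++ destruct (list_eq_dec Nat.eq_dec (b :: q') (b :: q)) as [E|E];
              [inversion E; congruence|reflexivity].
        -- destruct (list_eq_dec Nat.eq_dec (i :: q') (b :: q)) as [E|E];
           [inversion E; congruence|reflexivity].
Qed.
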